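(* Let $r,K,\mu$ satisfy Assumption 1, $a>0$ and $c\in\mathbb R$. If $(w,m)\in C^0([-a,a])^2$ is a solution of the localized problem (P$_a$), then $w(x)>0$ and $m(x)>0$ for all $x\in[-a,a)$.
   Context: Assumption 1: $r\in(1,\infty)$, $\mu\in\left(0,\min\left(\frac r2,1-\frac1r,1-K,K\right)\right)$, $K\in\left(0,\min\left(1,\frac{r}{r-1}\left(1-\frac{\mu}{1-\mu}\right)\right)\right)$. $f_w(w,m):=w(1-(w+m))+\mu(m-w)$, $f_m(w,m):=rm\left(1-\frac{w+m}{K}\right)+\mu(w-m)$; $(w^*,m^* )$ is the unique solution in $(0,1)\times(0,K)$ of $f_w=f_m=0$. The localized problem (P$_a$) for given $a>0$, $c\in\mathbb R$: $w,m\in C^0([-a,a])$ satisfy, in the weak (distributional) sense on $(-a,a)$, $-cw'-w''=f_w(w,m)\chi_{w\ge0}\chi_{m\ge0}$, $-cm'-m''=f_m(w,m)\chi_{w\ge0}\chi_{m\ge0}$, with boundary conditions $w(-a)=w^*$, $m(-a)=m^*$, $w(a)=m(a)=0$; here $\chi_{w\ge0}$ denotes the indicator of the set where $w\ge0$. *)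

(* Defs.v *)
From Stdlib Require Import Reals Lra List.
Open Scope R_scope.

Definition f_w (mu w m : R) : R := w * (1 - (w + m)) + mu * (m - w).
Definition f_m (r K mu w m : R) : R := r * m * (1 - (w + m) / K) + mu * (w - m).

Definition assumption1 (r K mu : R) : Prop :=
  1 < r /\
  0 < mu /\ mu < r / 2 /\ mu < 1 - 1 / r /\ mu < 1 - K /\ mu < K /\
  0 < K /\ K < 1 /\ K < r / (r - 1) * (1 - mu / (1 - mu)).

Definition is_coexistence_state (r K mu ws ms : R) : Prop :=
  (0 < ws < 1 /\ 0 < ms < K /\ f_w mu ws ms = 0 /\ f_m r K mu ws ms = 0) /\
  (forall w m, 0 < w < 1 -> 0 < m < K -> f_w mu w m = 0 -> f_m r K mu w m = 0 ->
     w = ws /\ m = ms).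

Definition continuous_on_closed (f : R -> R) (lo hi : R) : Prop :=
  forall x, lo <= x <= hi ->
    forall eps, 0 < eps -> exists delta, 0 < delta /\
      forall y, lo <= y <= hi -> Rabs (y - x) < delta -> Rabs (f y - f x) < eps.

(* Test functions: C^infinity functions with compact support in (lo, hi).
   D n is the n-th derivative of D 0 = phi. *)
Definition test_function (lo hi : R) (D : nat -> R -> R) : Prop :=
  (forall n x, derivable_pt_lim (D n) x (D (S n) x)) /\
  exists l h, lo < l /\ h < hi /\ forall x, (x < l \/ h < x) -> D O x = 0.

(* Henstock-Kurzweil (gauge) integral on [lo,hi]; it agrees with the
   Lebesgue integral on Lebesgue-integrable functions (used here for bounded
   measurable integrands).  A tagged partition is a list of (l, t, r)
   triples with consecutive subintervals [l,r] containing the tag t. *)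
Fixpoint delta_fine (delta : R -> R) (lo hi : R) (P : list (R * R * R)) : Prop :=
  match P with
  | nil => lo = hi
  | (l, t, r) :: P' =>
      l = lo /\ l <= t <= r /\ l < r /\
      t - delta t < l /\ r < t + delta t /\ delta_fine delta r hi P'
  end.

Fixpoint riemann_sum (f : R -> R) (P : list (R * R * R)) : R :=
  match P with
  | nil => 0
  | (l, t, r) :: P' => f t * (r - l) + riemann_sum f P'
  end.

Definition HK_integral (f : R -> R) (lo hi I : R) : Prop :=
  forall eps, 0 < eps -> exists delta : R -> R, (forall x, 0 < delta x) /\
    forall P, delta_fine delta lo hi P -> Rabs (riemann_sum f P - I) < eps.

Definition chi_nonneg (x : R) : R := if Rle_dec 0 x then 1 else 0.

(* Weak (distributional) formulation on (lo,hi) of  -c u' - u'' = F :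
   for every test function phi,  int u (c phi' - phi'') = int F phi. *)
Definition weak_solution (c : R) (u F : R -> R) (lo hi : R) : Prop :=
  forall D, test_function lo hi D ->
    exists I, HK_integral (fun x => u x * (c * D 1%nat x - D 2%nat x)) lo hi I /\
              HK_integral (fun x => F x * D O x) lo hi I.

Definition solves_Pa (r K mu ws ms a c : R) (w m : R -> R) : Prop :=
  continuous_on_closed w (- a) a /\ continuous_on_closed m (- a) a /\
  weak_solution c w (fun x => f_w mu (w x) (m x) * chi_nonneg (w x) * chi_nonneg (m x)) (- a) a /\
  weak_solution c m (fun x => f_m r K mu (w x) (m x) * chi_nonneg (w x) * chi_nonneg (m x)) (- a) a /\
  w (- a) = ws /\ m (- a) = ms /\ w a = 0 /\ m a = 0.

(* Main.v *)
Require Import Defs.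
From Stdlib Require Import Reals.
From Coquelicot Require Import Coquelicot.
From Stdlib Require Import Reals Lra Lia List ClassicalEpsilon FunctionalExtensionality Classical.
Open Scope R_scope.

Fixpoint peval (p : list R) (y : R) : R :=
  match p with nil => 0 | a :: q => a + y * peval q y end.
Fixpoint padd (p q : list R) : list R :=
  match p, q with
  | nil, _ => q
  | _, nil => p
  | a :: p', b :: q' => (a + b) :: padd p' q'
  end.
Definition pscal (s : R) (p : list R) := map (fun a => s * a) p.
Fixpoint pder (p : list R) : list R :=
  match p with nil => nil | a :: q => padd q (0 :: pder q) end.

Lemma peval_padd p q y : peval (padd p q) y = peval p y + peval q y.
Proof.
  revert q; induction p as [|a p IH]; intros [|b q]; simpl; try ring.
  rewrite IH; ring.
Qed.

Lemma peval_pscal s p y : peval (pscal s p) y = s * peval p y.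
Proof. induction p as [|a p IH]; simpl; [ring|]. rewrite IH; ring. Qed.

Lemma peval_der p y : is_derive (peval p) y (peval (pder p) y).
Proof.
  induction p as [|a p IH]; simpl.
  - apply (is_derive_const 0).
  - rewrite peval_padd. simpl.
    apply (is_derive_ext (fun y => a + y * peval p y)); [reflexivity|].
    evar (l : R). replace (peval p y + (0 + y * peval (pder p) y)) with l.
    + unfold l. apply @is_derive_plus. apply is_derive_const.
      apply (is_derive_mult (fun y => y) (peval p)). apply is_derive_id. exact IH.
      intros; apply Rmult_comm.
    + unfold l. unfold plus, mult, zero; simpl. unfold one; simpl. ring.
Qed.

Fixpoint psum (p : list R) : R := match p with nil => 0 | a :: q => Rabs a + psum q end.

Lemma psum_ge0 p : 0 <= psum p.
Proof. induction p; simpl; [lra|]. pose proof (Rabs_pos a); lra. Qed.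

Lemma peval_bound p y : 0 <= y -> Rabs (peval p y) <= psum p * (1 + y) ^ (length p).
Proof.
  intros Hy. induction p as [|a p IH]; simpl.
  - rewrite Rabs_R0; lra.
  - assert (H1 : 1 <= (1 + y) ^ length p).
    { apply pow_R1_Rle. lra. }
    pose proof (psum_ge0 p).
    eapply Rle_trans. apply Rabs_triang. rewrite Rabs_mult, (Rabs_right y) by lra.
    assert (Rabs a <= Rabs a * ((1+y) * (1+y)^length p)).
    { pose proof (Rabs_pos a). replace (Rabs a) with (Rabs a * 1) at 1 by ring.
      apply Rmult_le_compat_l; auto. nra. }
    assert (y * Rabs (peval p y) <= psum p * ((1+y) * (1+y)^length p)).
    { apply Rle_trans with (y * (psum p * (1+y)^length p)).
      apply Rmult_le_compat_l; auto. nra. }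
    nra.
Qed.

Lemma exp_pow_INR n x : exp (INR n * x) = exp x ^ n.
Proof.
  induction n. simpl. rewrite Rmult_0_l, exp_0; ring.
  rewrite S_INR, Rmult_plus_distr_r, Rmult_1_l, exp_plus, IHn. simpl; ring.
Qed.

Lemma exp_ge_pow K z : (0 < K)%nat -> 0 <= z -> (z / INR K) ^ K <= exp z.
Proof.
  intros HK Hz.
  assert (HK' : 0 < INR K) by (apply lt_0_INR; lia).
  replace z with (INR K * (z / INR K)) at 2 by (field; lra).
  rewrite exp_pow_INR. apply pow_incr. split.
  apply Rmult_le_pos; auto. left; apply Rinv_0_lt_compat; auto.
  destruct (Req_dec (z / INR K) 0) as [E|E].
  rewrite E, exp_0; lra.
  left. pose proof (exp_ineq1 _ E). lra.
Qed.

Lemma flat_bound (Sc : R) (N : nat) eps : 0 <= Sc -> 0 < eps ->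
  exists Y, 0 < Y /\ forall y, Y < y -> Sc * (1 + y) ^ N * exp (- y) * y < eps.
Proof.
  intros HS He.
  set (K := S (S N)).
  assert (HK : 0 < INR K) by (apply lt_0_INR; unfold K; lia).
  set (C := Sc * exp 1 * INR K ^ K).
  assert (HC : 0 <= C).
  { unfold C. apply Rmult_le_pos. apply Rmult_le_pos; auto. left; apply exp_pos.
    left; apply pow_lt; auto. }
  exists (C / eps + 1). split.
  { assert (0 <= C / eps) by (apply Rmult_le_pos; auto; left; apply Rinv_0_lt_compat; auto). lra. }
  intros y Hy.
  assert (Hy0 : 0 < y).
  { assert (0 <= C / eps) by (apply Rmult_le_pos; auto; left; apply Rinv_0_lt_compat; auto). lra. }
  set (z := 1 + y).
  assert (Hz : 1 < z) by (unfold z; lra).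
  pose proof (exp_ge_pow K z ltac:(unfold K; lia) ltac:(lra)) as Hexp.
  assert (E1 : exp (- y) = exp 1 * / exp z).
  { unfold z. rewrite <- exp_Ropp, <- exp_plus. f_equal; ring. }
  rewrite E1.
  assert (Hzp : 0 < (z / INR K) ^ K).
  { apply pow_lt. apply Rdiv_lt_0_compat; lra. }
  assert (Hzk : (z / INR K) ^ K = z ^ K / INR K ^ K).
  { unfold Rdiv. rewrite Rpow_mult_distr, pow_inv. reflexivity. }
  (* S z^N e / exp z * y <= S z^(N+1) e / exp z <= S e z^(N+1) K^K / z^K = C / z *)
  assert (Hzpos : 0 < z) by lra.
  assert (HKK : 0 < INR K ^ K) by (apply pow_lt; auto).
  assert (Hb : Sc * z ^ N * (exp 1 * / exp z) * y <= C / z).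
  { apply Rle_trans with (Sc * z ^ N * (exp 1 * / ((z / INR K) ^ K)) * z).
    - assert (0 <= Sc * z ^ N * exp 1).
      { apply Rmult_le_pos. apply Rmult_le_pos; auto. left; apply pow_lt; lra. left; apply exp_pos. }
      assert (/ exp z <= / ((z / INR K) ^ K)) by (apply Rinv_le_contravar; auto).
      assert (0 < / exp z) by (apply Rinv_0_lt_compat, exp_pos).
      assert (y <= z) by (unfold z; lra).
      apply Rle_trans with (Sc * z ^ N * exp 1 * / ((z / INR K) ^ K) * y).
      + replace (Sc * z ^ N * (exp 1 * / exp z) * y) with (Sc * z ^ N * exp 1 * y * / exp z) by ring.
        replace (Sc * z ^ N * exp 1 * / ((z / INR K) ^ K) * y) with (Sc * z ^ N * exp 1 * y * / ((z / INR K) ^ K)) by ring.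
        apply Rmult_le_compat_l; auto. apply Rmult_le_pos; auto. lra.
      + replace (Sc * z ^ N * (exp 1 * / ((z / INR K) ^ K)) * z) with (Sc * z ^ N * exp 1 * / ((z / INR K) ^ K) * z) by ring.
        apply Rmult_le_compat_l; auto. apply Rmult_le_pos; auto. left; apply Rinv_0_lt_compat; auto.
    - right. rewrite Hzk. unfold C. fold K in HKK. set (q := INR K ^ K) in *.
      unfold K. change (z ^ S (S N)) with (z * (z * z ^ N)). field.
      idtac.
      all: try (split; [lra|]); try split. all: try lra. apply pow_nonzero; lra. }
  eapply Rle_lt_trans. exact Hb.
  apply (Rmult_lt_reg_r z); auto. unfold Rdiv. rewrite Rmult_assoc, Rinv_l, Rmult_1_r by lra.
  apply (Rmult_lt_reg_l (/ eps)). apply Rinv_0_lt_compat; auto.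
  rewrite <- Rmult_assoc, Rinv_l, Rmult_1_l by lra. rewrite Rmult_comm. unfold z. lra.
Qed.

Fixpoint hp (n : nat) : list R :=
  match n with
  | O => 1 :: nil
  | S n => 0 :: 0 :: padd (hp n) (pscal (-1) (pder (hp n)))
  end.

Definition H (n : nat) (x : R) : R :=
  if Rlt_dec 0 x then peval (hp n) (/ x) * exp (- / x) else 0.

Lemma is_derive_g P x : 0 < x ->
  is_derive (fun t => peval P (/ t) * exp (- / t)) x
    (peval (0 :: 0 :: padd P (pscal (-1) (pder P))) (/ x) * exp (- / x)).
Proof.
  intros Hx.
  assert (Hinv : is_derive (fun t => / t) x (- 1 / x ^ 2)).
  { apply (is_derive_inv (fun t => t) x 1). auto_derive; auto. lra. }
  assert (H1 : is_derive (fun t => peval P (/ t)) x (- 1 / x ^ 2 * peval (pder P) (/ x))).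
  { apply (is_derive_comp (peval P) (fun t => / t)). apply peval_der. exact Hinv. }
  assert (H2 : is_derive (fun t => exp (- / t)) x (- (- 1 / x ^ 2) * exp (- / x))).
  { apply (is_derive_comp exp (fun t => - / t)). apply is_derive_exp.
    apply (is_derive_opp (fun t => / t)). exact Hinv. }
  pose proof (is_derive_mult _ _ x _ _ H1 H2 ltac:(intros; apply Rmult_comm)) as H3.
  match type of H3 with is_derive _ _ ?v => replace (peval (0 :: 0 :: padd P (pscal (-1) (pder P))) (/ x) * exp (- / x)) with v; [exact H3|] end.
  simpl. rewrite peval_padd, peval_pscal.
  unfold plus, mult, opp; simpl. field. lra.
Qed.

Lemma H_der_pos n x : 0 < x -> is_derive (H n) x (H (S n) x).
Proof.
  intros Hx.
  apply (is_derive_ext_loc (fun t => peval (hp n) (/ t) * exp (- / t))).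
  - apply (filter_imp (fun u => 0 < u)); [|apply (open_gt 0 x Hx)].
    unfold H; intros t Ht. destruct (Rlt_dec 0 t); [reflexivity|lra].
  - unfold H. destruct (Rlt_dec 0 x); [|lra]. apply is_derive_g; auto.
Qed.

Lemma H_der_neg n x : x < 0 -> is_derive (H n) x (H (S n) x).
Proof.
  intros Hx.
  apply (is_derive_ext_loc (fun t => 0)).
  - apply (filter_imp (fun u => u < 0)); [|apply (open_lt 0 x Hx)].
    unfold H; intros t Ht. destruct (Rlt_dec 0 t); [lra|reflexivity].
  - unfold H. destruct (Rlt_dec 0 x); [lra|]. apply (is_derive_const 0).
Qed.

Lemma H_der_0 n : is_derive (H n) 0 (H (S n) 0).
Proof.
  unfold H at 2. destruct (Rlt_dec 0 0); [lra|].
  apply is_derive_Reals. intros eps He.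
  destruct (flat_bound (psum (hp n)) (length (hp n)) eps (psum_ge0 _) He) as [Y [HY HYb]].
  assert (Hd : 0 < / Y) by (apply Rinv_0_lt_compat; auto).
  exists (mkposreal _ Hd). intros h Hh0 Hh. simpl in Hh.
  rewrite Rplus_0_l. unfold H. destruct (Rlt_dec 0 0); [lra|].
  destruct (Rlt_dec 0 h) as [Hp|Hn].
  - rewrite Rabs_right in Hh by lra.
    assert (Hy : Y < / h).
    { apply (Rmult_lt_reg_l h); auto. rewrite Rinv_r by lra.
      apply (Rmult_lt_reg_r (/ Y)); auto. rewrite Rmult_1_l, Rmult_assoc, Rinv_r, Rmult_1_r by lra. exact Hh. }
    specialize (HYb _ Hy).
    assert (Hyp : 0 < / h) by (apply Rinv_0_lt_compat; auto).
    pose proof (peval_bound (hp n) (/ h) ltac:(lra)) as Hb.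
    replace ((peval (hp n) (/ h) * exp (- / h) - 0) / h - 0) with (peval (hp n) (/ h) * exp (- / h) * / h) by (field; lra).
    rewrite Rabs_mult, Rabs_mult, (Rabs_right (exp _)) by (left; apply exp_pos).
    rewrite (Rabs_right (/ h)) by lra.
    eapply Rle_lt_trans; [|exact HYb].
    apply Rmult_le_compat_r; [lra|]. apply Rmult_le_compat_r; [left; apply exp_pos|]. exact Hb.
  - replace ((0 - 0) / h - 0) with 0 by (field; auto). rewrite Rabs_R0; lra.
Qed.

Lemma H_chain n x : is_derive (H n) x (H (S n) x).
Proof.
  destruct (Rtotal_order x 0) as [Hx|[Hx|Hx]].
  - apply H_der_neg; auto.
  - subst; apply H_der_0.
  - apply H_der_pos; auto.
Qed.

Lemma H0_pos x : 0 < x -> 0 < H 0 x.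
Proof. intros Hx; unfold H; destruct (Rlt_dec 0 x); [|lra]. simpl. rewrite Rmult_0_r, Rplus_0_r, Rmult_1_l. apply exp_pos. Qed.
Lemma H0_zero x : x <= 0 -> H 0 x = 0.
Proof. intros Hx; unfold H; destruct (Rlt_dec 0 x); [lra|auto]. Qed.

Definition Dop (f : R -> R) (x : R) : R :=
  epsilon (inhabits 0) (fun l => is_derive f x l).

Lemma Dop_spec f x l : is_derive f x l -> Dop f x = l.
Proof.
  intros Hd. unfold Dop.
  assert (Hex : exists l, is_derive f x l) by (exists l; auto).
  pose proof (epsilon_spec (inhabits 0) _ Hex) as Hs.
  apply is_derive_Reals in Hs. apply is_derive_Reals in Hd.
  eapply uniqueness_limite; eauto.
Qed.

Lemma Dop_ext f g : (forall x, is_derive f x (g x)) -> Dop f = g.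
Proof. intros Hd. apply functional_extensionality; intros x; apply Dop_spec, Hd. Qed.

Fixpoint SmoothN (n : nat) (f : R -> R) : Prop :=
  match n with
  | O => True
  | S n => (forall x, is_derive f x (Dop f x)) /\ SmoothN n (Dop f)
  end.

Fixpoint Dn (n : nat) (f : R -> R) : R -> R :=
  match n with O => f | S n => Dop (Dn n f) end.

Lemma SmoothN_S n f : SmoothN (S n) f -> SmoothN n f.
Proof.
  revert f; induction n; intros f Hf; simpl in *; auto.
  destruct Hf as [H1 H2]; split; auto.
Qed.

Lemma Dn_Dop n f : Dn n (Dop f) = Dn (S n) f.
Proof. induction n; simpl; auto. rewrite IHn; reflexivity. Qed.

Lemma SmoothN_Dn n k f : SmoothN (S (k + n)) f -> forall x, is_derive (Dn k f) x (Dn (S k) f x).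
Proof.
  revert f; induction k; intros f Hf x; simpl in *.
  - apply Hf.
  - destruct Hf as [_ Hf]. specialize (IHk _ Hf x). rewrite !Dn_Dop in IHk. exact IHk.
Qed.

Definition chain (D : nat -> R -> R) := forall n x, is_derive (D n) x (D (S n) x).

Lemma smooth_chain f : (forall n, SmoothN n f) -> chain (fun n => Dn n f).
Proof. intros Hs n x. apply (SmoothN_Dn 0 n f). rewrite Nat.add_0_r. apply Hs. Qed.

Lemma chain_smooth D : chain D -> forall n k, SmoothN n (D k).
Proof.
  intros Hc n. induction n; intros k; simpl; auto.
  assert (E : Dop (D k) = D (S k)) by (apply Dop_ext; intros; apply Hc).
  rewrite E. split; auto.
Qed.

Lemma SmoothN_plus n f g : SmoothN n f -> SmoothN n g -> SmoothN n (fun x => f x + g x).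
Proof.
  revert f g; induction n; intros f g Hf Hg; simpl in *; auto.
  destruct Hf as [Hf1 Hf2], Hg as [Hg1 Hg2].
  assert (E : Dop (fun x => f x + g x) = fun x => Dop f x + Dop g x).
  { apply Dop_ext. intros x. apply (is_derive_plus f g); auto. }
  rewrite E. split; auto. intros x. apply (is_derive_plus f g); auto.
Qed.

Lemma SmoothN_mult n f g : SmoothN n f -> SmoothN n g -> SmoothN n (fun x => f x * g x).
Proof.
  revert f g; induction n; intros f g Hf Hg; simpl; auto.
  pose proof (SmoothN_S _ _ Hf) as Hf'. pose proof (SmoothN_S _ _ Hg) as Hg'.
  destruct Hf as [Hf1 Hf2], Hg as [Hg1 Hg2].
  assert (Hd : forall x, is_derive (fun x => f x * g x) x (Dop f x * g x + f x * Dop g x)).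
  { intros x. apply (is_derive_mult f g); auto. intros; apply Rmult_comm. }
  assert (E : Dop (fun x => f x * g x) = fun x => Dop f x * g x + f x * Dop g x) by (apply Dop_ext; auto).
  rewrite E. split; auto.
  apply SmoothN_plus; apply IHn; auto.
Qed.

Lemma SmoothN_aff n f s a b : SmoothN n f -> SmoothN n (fun x => s * f (a * x + b)).
Proof.
  revert f s; induction n; intros f s Hf; simpl; auto.
  destruct Hf as [Hf1 Hf2].
  assert (Hd : forall x, is_derive (fun x => s * f (a * x + b)) x ((s * a) * Dop f (a * x + b))).
  { intros x. rewrite Rmult_assoc. apply is_derive_scal.
    apply (is_derive_comp f (fun x => a * x + b)). apply Hf1.
    auto_derive; auto. ring. }
  assert (E : Dop (fun x => s * f (a * x + b)) = fun x => (s * a) * Dop f (a * x + b)) by (apply Dop_ext; auto).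
  rewrite E. split; auto.
Qed.

Definition rho (x : R) : R := H 0 (1 + x) * H 0 (1 - x).

Lemma rho_smooth n : SmoothN n rho.
Proof.
  unfold rho. apply SmoothN_mult.
  - pose proof (SmoothN_aff n (H 0) 1 1 1 (chain_smooth H H_chain n 0)) as Hs.
    replace (fun x => H 0 (1 + x)) with (fun x => 1 * H 0 (1 * x + 1)); auto.
    apply functional_extensionality; intros; rewrite Rmult_1_l; f_equal; ring.
  - pose proof (SmoothN_aff n (H 0) 1 (-1) 1 (chain_smooth H H_chain n 0)) as Hs.
    replace (fun x => H 0 (1 - x)) with (fun x => 1 * H 0 (-1 * x + 1)); auto.
    apply functional_extensionality; intros; rewrite Rmult_1_l; f_equal; ring.
Qed.

Lemma rho_pos x : -1 < x < 1 -> 0 < rho x.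
Proof. intros Hx. unfold rho. apply Rmult_lt_0_compat; apply H0_pos; lra. Qed.

Lemma rho_ge0 x : 0 <= rho x.
Proof.
  unfold rho. assert (forall y, 0 <= H 0 y).
  { intros y. destruct (Rlt_dec 0 y). left; apply H0_pos; auto. rewrite H0_zero; lra. }
  apply Rmult_le_pos; auto.
Qed.

Lemma rho_zero x : x <= -1 \/ 1 <= x -> rho x = 0.
Proof.
  intros [Hx|Hx]; unfold rho.
  rewrite (H0_zero (1 + x)) by lra; ring.
  rewrite (H0_zero (1 - x)) by lra; ring.
Qed.

Definition bump (x0 e : R) (x : R) : R := rho ((x - x0) / e).

Lemma bump_smooth x0 e n : SmoothN n (bump x0 e).
Proof.
  pose proof (SmoothN_aff n rho 1 (/ e) (- x0 / e) (rho_smooth n)) as Hs.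
  replace (bump x0 e) with (fun x => 1 * rho (/ e * x + - x0 / e)); auto.
  apply functional_extensionality; intros; unfold bump. rewrite Rmult_1_l. f_equal. unfold Rdiv. ring.
Qed.

Definition bumpD (x0 e : R) (n : nat) : R -> R := Dn n (bump x0 e).

Lemma bumpD_chain x0 e : chain (bumpD x0 e).
Proof. apply smooth_chain. intros n; apply bump_smooth. Qed.

Lemma bump_pos x0 e x : 0 < e -> x0 - e < x < x0 + e -> 0 < bump x0 e x.
Proof.
  intros He Hx. unfold bump. apply rho_pos. split.
  apply (Rmult_lt_reg_r e); auto. unfold Rdiv; rewrite Rmult_assoc, Rinv_l; lra.
  apply (Rmult_lt_reg_r e); auto. unfold Rdiv; rewrite Rmult_assoc, Rinv_l; lra.
Qed.

Lemma bump_ge0 x0 e x : 0 <= bump x0 e x.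
Proof. apply rho_ge0. Qed.

Lemma bump_zero x0 e x : 0 < e -> (x <= x0 - e \/ x0 + e <= x) -> bump x0 e x = 0.
Proof.
  intros He Hx. unfold bump. apply rho_zero. destruct Hx; [left|right].
  apply (Rmult_le_reg_r e); auto. unfold Rdiv; rewrite Rmult_assoc, Rinv_l; lra.
  apply (Rmult_le_reg_r e); auto. unfold Rdiv; rewrite Rmult_assoc, Rinv_l; lra.
Qed.


Lemma RInt_minus' (f g : R -> R) a b : ex_RInt f a b -> ex_RInt g a b ->
  RInt (fun x => f x - g x) a b = RInt f a b - RInt g a b.
Proof. intros Hi1 Hi2. exact (RInt_minus (V:=R_CompleteNormedModule) f g a b Hi1 Hi2). Qed.
Lemma RInt_plus' (f g : R -> R) a b : ex_RInt f a b -> ex_RInt g a b ->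
  RInt (fun x => f x + g x) a b = RInt f a b + RInt g a b.
Proof. intros Hi1 Hi2. exact (RInt_plus (V:=R_CompleteNormedModule) f g a b Hi1 Hi2). Qed.
Lemma RInt_scal' (f : R -> R) c a b : ex_RInt f a b ->
  RInt (fun x => c * f x) a b = c * RInt f a b.
Proof. intros Hi1. exact (RInt_scal (V:=R_CompleteNormedModule) f a b c Hi1). Qed.
Lemma RInt_const' (c a b : R) : RInt (fun _ => c) a b = (b - a) * c.
Proof. exact (RInt_const (V:=R_CompleteNormedModule) a b c). Qed.
Lemma RInt_Chasles' (f : R -> R) a b c : ex_RInt f a b -> ex_RInt f b c ->
  RInt f a b + RInt f b c = RInt f a c.
Proof. intros Hi1 Hi2. exact (RInt_Chasles (V:=R_CompleteNormedModule) f a b c Hi1 Hi2). Qed.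
Lemma ex_RInt_cont (f : R -> R) a b : (forall x, continuous f x) -> ex_RInt f a b.
Proof. intros; apply (@ex_RInt_continuous R_CompleteNormedModule); auto. Qed.
Lemma RInt_point' (f : R -> R) a : RInt f a a = 0.
Proof. exact (RInt_point (V:=R_CompleteNormedModule) a f). Qed.

Lemma ex_RInt_minus' (f g : R -> R) a b : ex_RInt f a b -> ex_RInt g a b ->
  ex_RInt (fun x => f x - g x) a b.
Proof. intros Hi1 Hi2. exact (ex_RInt_minus (V:=R_CompleteNormedModule) f g a b Hi1 Hi2). Qed.
Lemma ex_RInt_plus' (f g : R -> R) a b : ex_RInt f a b -> ex_RInt g a b ->
  ex_RInt (fun x => f x + g x) a b.
Proof. intros Hi1 Hi2. exact (ex_RInt_plus (V:=R_CompleteNormedModule) f g a b Hi1 Hi2). Qed.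
Lemma ex_RInt_scal' (f : R -> R) c a b : ex_RInt f a b ->
  ex_RInt (fun x => c * f x) a b.
Proof. intros Hi1. exact (ex_RInt_scal (V:=R_CompleteNormedModule) f a b c Hi1). Qed.
Lemma ex_RInt_const' (c a b : R) : ex_RInt (fun _ => c) a b.
Proof. exact (ex_RInt_const (V:=R_CompleteNormedModule) a b c). Qed.

Lemma fine_le delta lo hi P : delta_fine delta lo hi P -> lo <= hi.
Proof.
  revert lo; induction P as [|[[l t] r] P IH]; intros lo HP; simpl in HP.
  - lra.
  - destruct HP as [-> [Ht [Hlr [_ [_ HP]]]]]. specialize (IH _ HP). lra.
Qed.

Lemma fine_app delta lo mid hi P1 P2 :
  delta_fine delta lo mid P1 -> delta_fine delta mid hi P2 -> delta_fine delta lo hi (P1 ++ P2).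
Proof.
  revert lo; induction P1 as [|[[l t] r] P IH]; intros lo H1 H2; simpl in *.
  - subst; auto.
  - destruct H1 as [-> [Ht [Hlr [H3 [H4 HP]]]]]. repeat split; auto; try lra.
Qed.

Lemma riemann_app f P1 P2 : riemann_sum f (P1 ++ P2) = riemann_sum f P1 + riemann_sum f P2.
Proof. induction P1 as [|[[l t] r] P IH]; simpl; [ring|]. rewrite IH; ring. Qed.

Lemma cousin delta lo hi : (forall x, 0 < delta x) -> lo <= hi ->
  exists P, delta_fine delta lo hi P.
Proof.
  intros Hd Hlh.
  set (E := fun x => lo <= x <= hi /\ exists P, delta_fine delta lo x P).
  assert (Hb : bound E) by (exists hi; intros x [Hx _]; lra).
  assert (Hne : exists x, E x) by (exists lo; split; [lra|exists nil; simpl; auto]).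
  destruct (completeness E Hb Hne) as [s [Hub Hlub]].
  assert (Hlos : lo <= s) by (apply Hub; split; [lra|exists nil; simpl; auto]).
  assert (Hshi : s <= hi) by (apply Hlub; intros x [Hx _]; lra).
  destruct (classic (exists x, E x /\ s - delta s < x)) as [[x [[Hx1 [P HP]] Hx2]]|Hn].
  2:{ exfalso. assert (Hu : is_upper_bound E (s - delta s)).
      { intros x Ex. destruct (Rle_dec x (s - delta s)) as [|Hc]; auto.
        exfalso; apply Hn; exists x; split; auto; lra. }
      specialize (Hlub _ Hu). specialize (Hd s). lra. }
  assert (Hxs : x <= s) by (apply Hub; split; auto; exists P; auto).
  set (y := Rmin hi (s + delta s / 2)).
  assert (Hds := Hd s).
  assert (Hy1 : s <= y) by (unfold y; apply Rmin_glb; lra).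
  assert (Hy2 : y <= s + delta s / 2) by (unfold y; apply Rmin_r).
  assert (Hy3 : y <= hi) by (unfold y; apply Rmin_l).
  assert (Ey : E y).
  { split; [lra|]. destruct (Req_dec x y) as [Exy|Nxy].
    - subst y; rewrite <- Exy; exists P; auto.
    - exists (P ++ (x, s, y) :: nil). eapply fine_app; [exact HP|].
      simpl. repeat split; try lra. }
  assert (Hys : y <= s) by (apply Hub; auto).
  assert (Hyh : y = hi).
  { unfold y in *. destruct (Rle_dec hi (s + delta s / 2)) as [Hle|Hgt].
    rewrite Rmin_left; auto. rewrite Rmin_right in Hys; lra. }
  destruct Ey as [_ [Q HQ]]. rewrite Hyh in HQ. exists Q; auto.
Qed.

Lemma fine_mono d1 d2 lo hi P : (forall x, d1 x <= d2 x) ->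
  delta_fine d1 lo hi P -> delta_fine d2 lo hi P.
Proof.
  intros Hd. revert lo; induction P as [|[[l t] r] P IH]; intros lo HP; simpl in *; auto.
  destruct HP as [-> [Ht [Hlr [H3 [H4 HP]]]]]. specialize (Hd t).
  repeat split; auto; lra.
Qed.

Lemma HK_unique f lo hi I1 I2 : lo <= hi ->
  HK_integral f lo hi I1 -> HK_integral f lo hi I2 -> I1 = I2.
Proof.
  intros Hlh H1 H2.
  apply Rminus_diag_uniq. apply Rabs_eq_0.
  apply Rle_antisym; [|apply Rabs_pos].
  apply le_epsilon. intros eps He.
  destruct (H1 (eps/2) ltac:(lra)) as [d1 [Hd1 Hf1]].
  destruct (H2 (eps/2) ltac:(lra)) as [d2 [Hd2 Hf2]].
  destruct (cousin (fun x => Rmin (d1 x) (d2 x)) lo hi) as [P HP]; auto.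
  { intros x; apply Rmin_glb_lt; auto. }
  specialize (Hf1 P (fine_mono _ _ _ _ _ (fun x => Rmin_l _ _) HP)).
  specialize (Hf2 P (fine_mono _ _ _ _ _ (fun x => Rmin_r _ _) HP)).
  replace (I1 - I2) with (- (riemann_sum f P - I1) + (riemann_sum f P - I2)) by ring.
  eapply Rle_trans. apply Rabs_triang. rewrite Rabs_Ropp. lra.
Qed.

Lemma riemann_ext f g delta lo hi P : (forall x, lo <= x <= hi -> f x = g x) ->
  delta_fine delta lo hi P -> riemann_sum f P = riemann_sum g P.
Proof.
  revert lo; induction P as [|[[l t] r] P IH]; intros lo Hfg HP; simpl in *; auto.
  destruct HP as [-> [Ht [Hlr [H3 [H4 HP]]]]].
  pose proof (fine_le _ _ _ _ HP).
  rewrite (Hfg t) by lra. f_equal. apply (IH r); auto.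
  intros x Hx; apply Hfg; lra.
Qed.

Lemma HK_ext f g lo hi I : (forall x, lo <= x <= hi -> f x = g x) ->
  HK_integral g lo hi I -> HK_integral f lo hi I.
Proof.
  intros Hfg Hg eps He. destruct (Hg eps He) as [d [Hd Hf]].
  exists d; split; auto. intros P HP. rewrite (riemann_ext f g d lo hi P); auto.
Qed.

Lemma HK_zero lo hi : HK_integral (fun _ => 0) lo hi 0.
Proof.
  intros eps He. exists (fun _ => 1). split; [intros; lra|].
  intros P _. replace (riemann_sum (fun _ => 0) P) with 0.
  rewrite Rminus_0_r, Rabs_R0; auto.
  induction P as [|[[l t] r] P IH]; simpl; auto. rewrite <- IH; ring.
Qed.

Lemma cont_eps (g : R -> R) t : continuous g t ->
  forall eps, 0 < eps -> exists d, 0 < d /\ forall y, Rabs (y - t) < d -> Rabs (g y - g t) < eps.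
Proof.
  intros Hc eps He.
  apply continuity_pt_filterlim in Hc.
  destruct (Hc eps He) as [d [Hd Hy]].
  exists d; split; auto. intros y Hyt.
  destruct (Req_dec y t) as [->|Hne].
  - rewrite Rminus_diag, Rabs_R0; auto.
  - apply (Hy y). split. split. exact I. auto. exact Hyt.
Qed.

Lemma HK_cont (g : R -> R) lo hi : (forall x, continuous g x) -> lo <= hi ->
  HK_integral g lo hi (RInt g lo hi).
Proof.
  intros Hc Hlh eps He.
  set (eta := eps / (hi - lo + 1)).
  assert (Heta : 0 < eta) by (unfold eta; apply Rdiv_lt_0_compat; lra).
  set (d := fun t => epsilon (inhabits 1)
        (fun d => 0 < d /\ forall y, Rabs (y - t) < d -> Rabs (g y - g t) < eta)).
  assert (Hd : forall t, 0 < d t /\ forall y, Rabs (y - t) < d t -> Rabs (g y - g t) < eta).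
  { intros t. unfold d. apply epsilon_spec. apply cont_eps; auto. }
  assert (Hex : forall a b, ex_RInt g a b).
  { intros a b. apply (@ex_RInt_continuous R_CompleteNormedModule). intros; auto. }
  exists d; split; [intros; apply Hd|].
  assert (Hb : forall P lo, delta_fine d lo hi P ->
     Rabs (riemann_sum g P - RInt g lo hi) <= eta * (hi - lo)).
  { induction P as [|[[l t] r] P IH]; intros l0 HP; simpl in *.
    - subst. rewrite RInt_point. unfold zero; simpl. rewrite Rminus_0_r, Rabs_R0. lra.
    - destruct HP as [-> [Ht [Hlr [H3 [H4 HP]]]]].
      specialize (IH r HP). pose proof (fine_le _ _ _ _ HP).
      rewrite <- (RInt_Chasles g l0 r hi) by auto. unfold plus; simpl.
      assert (Hloc : Rabs (g t * (r - l0) - RInt g l0 r) <= eta * (r - l0)).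
      { assert (Ec : RInt (fun _ => g t) l0 r = g t * (r - l0)).
        { rewrite RInt_const'. apply Rmult_comm. }
        rewrite <- Ec.
        rewrite <- RInt_minus' by (auto; apply ex_RInt_const').
        replace (eta * (r - l0)) with ((r - l0) * eta) by ring.
        apply abs_RInt_le_const; [lra| |].
        - apply ex_RInt_minus'; auto. apply ex_RInt_const'.
        - intros y Hy.
          destruct (Hd t) as [_ Hdt]. rewrite <- Rabs_Ropp.
          replace (- (g t - g y)) with (g y - g t) by ring.
          left; apply Hdt. apply Rabs_def1; lra. }
      replace (g t * (r - l0) + riemann_sum g P - (RInt g l0 r + RInt g r hi))
        with ((g t * (r - l0) - RInt g l0 r) + (riemann_sum g P - RInt g r hi)) by ring.
      eapply Rle_trans. apply Rabs_triang. lra. }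
  intros P HP. specialize (Hb P lo HP).
  eapply Rle_lt_trans. exact Hb.
  unfold eta. apply (Rmult_lt_reg_r (hi - lo + 1)); [lra|].
  unfold Rdiv. replace (eps * / (hi - lo + 1) * (hi - lo) * (hi - lo + 1)) with (eps * (hi - lo)) by (field; lra).
  nra.
Qed.

Ltac fixeq := match goal with |- @eq _ ?x ?y => change (@eq R x y) end.

Definition C0 (f : R -> R) := forall x, continuous f x.

Lemma C0_mult (f g : R -> R) : C0 f -> C0 g -> C0 (fun x => f x * g x).
Proof. intros Hf Hg x. apply (continuous_mult f g); auto. Qed.
Lemma C0_plus (f g : R -> R) : C0 f -> C0 g -> C0 (fun x => f x + g x).
Proof. intros Hf Hg x. apply (continuous_plus f g); auto. Qed.
Lemma C0_minus (f g : R -> R) : C0 f -> C0 g -> C0 (fun x => f x - g x).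
Proof. intros Hf Hg x. apply (continuous_minus f g); auto. Qed.
Lemma C0_const c : C0 (fun _ => c).
Proof. intros x. apply continuous_const. Qed.
Lemma C0_scal c (f : R -> R) : C0 f -> C0 (fun x => c * f x).
Proof. intros Hf. apply C0_mult; auto. apply C0_const. Qed.
Lemma C0_id : C0 (fun x => x).
Proof. intros x. apply continuous_id. Qed.
Lemma C0_deriv (f f' : R -> R) : (forall x, is_derive f x (f' x)) -> C0 f.
Proof. intros Hd x. apply (ex_derive_continuous (K:=R_AbsRing) (V:=R_NormedModule)). exists (f' x); auto. Qed.
Lemma C0_exp a : C0 (fun x => exp (a * x)).
Proof.
  apply (C0_deriv _ (fun x => a * exp (a * x))). intros x.
  auto_derive; auto. ring.
Qed.
Lemma C0_ex_RInt (f : R -> R) a b : C0 f -> ex_RInt f a b.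
Proof. intros; apply ex_RInt_cont; auto. Qed.

Lemma is_derive_RInt' (f : R -> R) a x : C0 f -> is_derive (fun y => RInt f a y) x (f x).
Proof.
  intros Hf. apply (is_derive_RInt f _ a). 2: apply Hf.
  apply filter_forall. intros y. apply (RInt_correct (V:=R_CompleteNormedModule)). apply C0_ex_RInt; auto.
Qed.

Lemma C0_RInt (f : R -> R) a : C0 f -> C0 (fun y => RInt f a y).
Proof. intros Hf. apply (C0_deriv _ f). intros; apply is_derive_RInt'; auto. Qed.

Lemma RInt_zero_on (f : R -> R) a b : (forall x, Rmin a b < x < Rmax a b -> f x = 0) -> RInt f a b = 0.
Proof.
  intros Hz. rewrite (RInt_ext f (fun _ => 0)) by auto. rewrite RInt_const'. apply Rmult_0_r.
Qed.

Lemma RInt_restrict (f : R -> R) a b u v : C0 f -> a <= u -> u <= v -> v <= b ->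
  (forall x, x < u \/ v < x -> f x = 0) -> RInt f a b = RInt f u v.
Proof.
  intros Hf H1 H2 H3 Hz.
  rewrite <- (RInt_Chasles' f a u b) by (apply C0_ex_RInt; auto).
  rewrite <- (RInt_Chasles' f u v b) by (apply C0_ex_RInt; auto).
  rewrite (RInt_zero_on f a u), (RInt_zero_on f v b). fixeq; ring.
  - intros x Hx. apply Hz. right. rewrite Rmin_left in Hx by lra. lra.
  - intros x Hx. apply Hz. left. rewrite Rmax_right in Hx by lra. lra.
Qed.

Lemma RInt_pos_restrict (f : R -> R) a b u v : C0 f -> a <= u -> u < v -> v <= b ->
  (forall x, x < u \/ v < x -> f x = 0) -> (forall x, u < x < v -> 0 < f x) -> 0 < RInt f a b.
Proof.
  intros Hf H1 H2 H3 Hz Hp. rewrite (RInt_restrict f a b u v); auto; try lra.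
  apply RInt_gt_0; auto.
Qed.

Lemma RInt_le' (f g : R -> R) a b : a <= b -> C0 f -> C0 g -> (forall x, a <= x <= b -> f x <= g x) ->
  RInt f a b <= RInt g a b.
Proof.
  intros Hab Hf Hg Hle. apply RInt_le; auto; try apply C0_ex_RInt; auto.
  intros; apply Hle; lra.
Qed.

Definition supp (D : nat -> R -> R) (l h : R) := forall x, x < l \/ h < x -> D O x = 0.

Lemma chain_C0 D n : chain D -> C0 (D n).
Proof. intros Hc. apply (C0_deriv _ (D (S n))). apply Hc. Qed.

Lemma chain_supp_all D l h : chain D -> supp D l h -> forall n x, x < l \/ h < x -> D n x = 0.
Proof.
  intros Hc Hs n. induction n; intros x Hx; auto.
  assert (Hd : is_derive (D n) x 0).
  { apply (is_derive_ext_loc (fun _ => 0)).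
    - destruct Hx as [Hx|Hx].
      + apply (filter_imp (fun u => u < l)); [|apply (open_lt l x Hx)].
        intros u Hu; symmetry; apply IHn; auto.
      + apply (filter_imp (fun u => h < u)); [|apply (open_gt h x Hx)].
        intros u Hu; symmetry; apply IHn; auto.
    - apply (is_derive_const 0). }
  pose proof (Hc n x) as H1. apply is_derive_Reals in H1. apply is_derive_Reals in Hd.
  eapply uniqueness_limite; eauto.
Qed.

Definition kk (c x : R) : R := RInt (fun s => exp (- c * s)) 0 x.
Definition Jf (c : R) (G : R -> R) (al x : R) : R := RInt (fun t => exp (c * t) * G t) al x.
Definition PP (c : R) (G : R -> R) (al x : R) : R :=
  - RInt (fun s => exp (- c * s) * Jf c G al s) al x.

Lemma kk_der c x : is_derive (kk c) x (exp (- c * x)).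
Proof. unfold kk. apply (is_derive_RInt' (fun s => exp (- c * s)) 0 x). apply C0_exp. Qed.
Lemma kk_C0 c : C0 (kk c).
Proof. apply (C0_deriv _ _ (kk_der c)). Qed.

Lemma kk_lt c x y : x < y -> kk c x < kk c y.
Proof.
  intros Hxy. unfold kk.
  rewrite <- (RInt_Chasles' _ 0 x y) by (apply C0_ex_RInt, C0_exp).
  assert (0 < RInt (fun s => exp (- c * s)) x y).
  { apply RInt_gt_0; auto. intros; apply exp_pos. intros; apply C0_exp. }
  lra.
Qed.
Lemma kk_le c x y : x <= y -> kk c x <= kk c y.
Proof. intros [H|H]; [left; apply kk_lt; auto|subst; lra]. Qed.

Lemma Jf_der c G al x : C0 G -> is_derive (Jf c G al) x (exp (c * x) * G x).
Proof. intros HG. unfold Jf. apply (is_derive_RInt' (fun t => exp (c * t) * G t) al x). apply C0_mult; auto. apply C0_exp. Qed.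
Lemma Jf_C0 c G al : C0 G -> C0 (Jf c G al).
Proof. intros HG. apply (C0_deriv _ _ (fun x => Jf_der c G al x HG)). Qed.

Lemma PP_der c G al x : C0 G -> is_derive (PP c G al) x (- (exp (- c * x) * Jf c G al x)).
Proof.
  intros HG. unfold PP. apply (is_derive_opp (fun y => RInt (fun s => exp (- c * s) * Jf c G al s) al y)).
  apply (is_derive_RInt' (fun s => exp (- c * s) * Jf c G al s) al x). apply C0_mult. apply C0_exp. apply Jf_C0; auto.
Qed.
Lemma PP_C0 c G al : C0 G -> C0 (PP c G al).
Proof. intros HG. apply (C0_deriv _ _ (fun x => PP_der c G al x HG)). Qed.

Lemma ibp c G al be D l h : C0 G -> chain D -> al < l -> h < be -> supp D l h ->
  RInt (fun x => PP c G al x * (c * D 1%nat x - D 2%nat x)) al be = RInt (fun x => G x * D 0%nat x) al be.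
Proof.
  intros HG Hc Hl Hh Hs.
  set (P := PP c G al). set (J := Jf c G al).
  set (Hf := fun x => P x * (c * D 0%nat x - D 1%nat x) + (- exp (- c * x) * J x) * D 0%nat x).
  set (Hf' := fun x => P x * (c * D 1%nat x - D 2%nat x) - G x * D 0%nat x).
  assert (Hd : forall x, is_derive Hf x (Hf' x)).
  { intros x. unfold Hf, Hf'.
    assert (E1 := PP_der c G al x HG). assert (E2 := Jf_der c G al x HG).
    assert (E3 := Hc 0%nat x). assert (E4 := Hc 1%nat x).
    fold P in E1. fold J in E1, E2.
    auto_derive.
    - repeat split; try (eexists; eauto).
    - replace (Derive (fun x0 => P x0) x) with (- (exp (- c * x) * J x)) by (symmetry; apply is_derive_unique; auto).
      replace (Derive (fun x0 => J x0) x) with (exp (c * x) * G x) by (symmetry; apply is_derive_unique; auto).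
      replace (Derive (fun x0 => D 0%nat x0) x) with (D 1%nat x) by (symmetry; apply is_derive_unique; auto).
      replace (Derive (fun x0 => D 1%nat x0) x) with (D 2%nat x) by (symmetry; apply is_derive_unique; auto).
      assert (Ee : exp (- c * x) * exp (c * x) = 1).
      { rewrite <- exp_plus. replace (- c * x + c * x) with 0 by ring. apply exp_0. }
      replace (- exp (- c * x) * (1 * (exp (c * x) * G x))) with (- (exp (- c * x) * exp (c * x)) * G x) by ring.
      rewrite Ee. ring. }
  assert (HC' : C0 Hf').
  { unfold Hf'. apply C0_minus; apply C0_mult.
    apply PP_C0; auto. apply C0_minus. apply C0_scal. apply chain_C0; auto. apply chain_C0; auto.
    auto. apply chain_C0; auto. }
  assert (HI : is_RInt Hf' al be (minus (Hf be) (Hf al))).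
  { apply (is_RInt_derive (V:=R_CompleteNormedModule)); intros; auto. }
  assert (Hz : Hf be = 0 /\ Hf al = 0).
  { unfold Hf. rewrite !(chain_supp_all D l h Hc Hs 0%nat), !(chain_supp_all D l h Hc Hs 1%nat) by lra.
    split; ring. }
  destruct Hz as [Hz1 Hz2]. rewrite Hz1, Hz2 in HI.
  apply (is_RInt_unique (V:=R_CompleteNormedModule)) in HI.
  unfold Hf' in HI. rewrite RInt_minus' in HI.
  - unfold minus, plus, opp in HI; simpl in HI. fixeq. lra.
  - apply C0_ex_RInt. apply C0_mult. apply PP_C0; auto. apply C0_minus. apply C0_scal. apply chain_C0; auto. apply chain_C0; auto.
  - apply C0_ex_RInt. apply C0_mult; auto. apply chain_C0; auto.
Qed.

Section Phi.
Variable c al : R.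
Variable Psi : nat -> R -> R.

Definition qf (x : R) : R := RInt (Psi 0%nat) al x.
Definition Iq (x : R) : R := RInt (fun t => exp (- c * t) * qf t) al x.
Definition phi (x : R) : R := - exp (c * x) * Iq x.
Definition Qs (n : nat) : R -> R := match n with O => qf | S n => Psi n end.
Fixpoint Dphi (n : nat) : R -> R :=
  match n with O => phi | S n => fun x => c * Dphi n x - Qs n x end.

Hypothesis Hc : chain Psi.

Lemma qf_der x : is_derive qf x (Psi 0%nat x).
Proof. unfold qf. apply (is_derive_RInt' (Psi 0%nat) al x). apply chain_C0; auto. Qed.
Lemma qf_C0 : C0 qf.
Proof. apply (C0_deriv _ _ qf_der). Qed.
Lemma Iq_der x : is_derive Iq x (exp (- c * x) * qf x).
Proof. unfold Iq. apply (is_derive_RInt' (fun t => exp (- c * t) * qf t) al x). apply C0_mult. apply C0_exp. apply qf_C0. Qed.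

Lemma Qs_chain n x : is_derive (Qs n) x (Qs (S n) x).
Proof. destruct n; simpl. apply qf_der. apply Hc. Qed.

Lemma Dphi_chain : chain Dphi.
Proof.
  intros n. induction n; intros x.
  - simpl. unfold phi. assert (E := Iq_der x). auto_derive.
    + eexists; eauto.
    + replace (Derive (fun x0 => Iq x0) x) with (exp (- c * x) * qf x) by (symmetry; apply is_derive_unique; auto).
      assert (Ee : exp (c * x) * exp (- c * x) = 1).
      { rewrite <- exp_plus. replace (c * x + - c * x) with 0 by ring. apply exp_0. }
      replace (- exp (c * x) * (1 * (exp (- c * x) * qf x))) with (- (exp (c * x) * exp (- c * x)) * qf x) by ring.
      rewrite Ee. ring.
  - change (is_derive (fun x => c * Dphi n x - Qs n x) x (c * Dphi (S n) x - Qs (S n) x)).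
    apply (is_derive_minus (fun x => c * Dphi n x) (Qs n)).
    apply is_derive_scal. apply IHn. apply Qs_chain.
Qed.

Lemma Dphi_L x : c * Dphi 1%nat x - Dphi 2%nat x = Psi 0%nat x.
Proof. simpl. ring. Qed.

Variable be l h : R.
Hypothesis Hl : al < l.
Hypothesis Hh : h < be.
Hypothesis Hs : supp Psi l h.
Hypothesis Hm0 : RInt (Psi 0%nat) al be = 0.
Hypothesis Hm1 : RInt (fun x => kk c x * Psi 0%nat x) al be = 0.

Lemma Psi0_zero x : x < l \/ h < x -> Psi 0%nat x = 0.
Proof. apply Hs. Qed.

Lemma qf_zero x : x < l \/ h < x -> qf x = 0.
Proof.
  intros [Hx|Hx]; unfold qf.
  - apply RInt_zero_on. intros y Hy. apply Psi0_zero. left.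
    assert (Rmax al x < l) by (apply Rmax_lub_lt; auto). lra.
  - assert (Hle : l <= h \/ h < l) by lra.
    rewrite <- (RInt_Chasles' (Psi 0%nat) al be x) by (apply C0_ex_RInt, chain_C0; auto).
    rewrite Hm0. rewrite (RInt_zero_on _ be x). fixeq; ring.
    intros y Hy. apply Psi0_zero. right.
    assert (h < Rmin be x) by (apply Rmin_glb_lt; lra). lra.
Qed.

Lemma Iq_be : RInt (fun t => exp (- c * t) * qf t) al be = 0.
Proof.
  set (F := fun x => kk c x * qf x).
  set (F' := fun x => exp (- c * x) * qf x + kk c x * Psi 0%nat x).
  assert (Hd : forall x, is_derive F x (F' x)).
  { intros x. unfold F, F'.
    assert (E1 := kk_der c x). assert (E2 := qf_der x).
    auto_derive.
    - split; [eexists; eauto|split; [eexists; eauto|auto]].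
    - replace (Derive (fun x0 => kk c x0) x) with (exp (- c * x)) by (symmetry; apply is_derive_unique; auto).
      replace (Derive (fun x0 => qf x0) x) with (Psi 0%nat x) by (symmetry; apply is_derive_unique; auto).
      ring. }
  assert (HC' : C0 F').
  { unfold F'. apply C0_plus; apply C0_mult. apply C0_exp. apply qf_C0. apply kk_C0. apply chain_C0; auto. }
  assert (HI : is_RInt F' al be (minus (F be) (F al))).
  { apply (is_RInt_derive (V:=R_CompleteNormedModule)); intros; auto. }
  assert (Hz : F be = 0 /\ F al = 0).
  { unfold F. rewrite (qf_zero be) by lra. unfold qf at 1. rewrite RInt_point'. split; ring. }
  destruct Hz as [Hz1 Hz2]. rewrite Hz1, Hz2 in HI.
  apply (is_RInt_unique (V:=R_CompleteNormedModule)) in HI.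
  unfold F' in HI. rewrite RInt_plus' in HI.
  - rewrite Hm1 in HI. unfold minus, plus, opp in HI; simpl in HI. fixeq. lra.
  - apply C0_ex_RInt. apply C0_mult. apply C0_exp. apply qf_C0.
  - apply C0_ex_RInt. apply C0_mult. apply kk_C0. apply chain_C0; auto.
Qed.

Lemma phi_supp : supp Dphi l h.
Proof.
  intros x [Hx|Hx]; simpl; unfold phi, Iq.
  - rewrite RInt_zero_on. ring. intros y Hy. rewrite qf_zero. ring. left.
    assert (Rmax al x < l) by (apply Rmax_lub_lt; auto). lra.
  - rewrite <- (RInt_Chasles' _ al be x) by (apply C0_ex_RInt, C0_mult; [apply C0_exp|apply qf_C0]).
    rewrite Iq_be. rewrite (RInt_zero_on _ be x). fixeq; ring.
    intros y Hy. rewrite qf_zero. ring. right.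
    assert (h < Rmin be x) by (apply Rmin_glb_lt; lra). lra.
Qed.

End Phi.

Lemma zero_moment c al be (V : R -> R) :
  C0 V ->
  (forall D l h, chain D -> al < l -> h < be -> supp D l h ->
     RInt (fun x => V x * (c * D 1%nat x - D 2%nat x)) al be = 0) ->
  forall Psi l h, chain Psi -> al < l -> h < be -> supp Psi l h ->
    RInt (Psi 0%nat) al be = 0 -> RInt (fun x => kk c x * Psi 0%nat x) al be = 0 ->
    RInt (fun x => V x * Psi 0%nat x) al be = 0.
Proof.
  intros HV Hw Psi l h Hc Hl Hh Hs Hm0 Hm1.
  rewrite <- (Hw (Dphi c al Psi) l h); auto.
  - apply RInt_ext. intros x _. rewrite Dphi_L. reflexivity.
  - apply Dphi_chain; auto.
  - eapply phi_supp; eauto.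
Qed.

Lemma bump_test x0 e : 0 < e -> chain (bumpD x0 e) /\ supp (bumpD x0 e) (x0 - e) (x0 + e).
Proof.
  intros He. split. apply bumpD_chain.
  intros x Hx. change (bump x0 e x = 0). apply bump_zero; auto. lra.
Qed.

Lemma bump_C0 x0 e : C0 (bump x0 e).
Proof. apply (chain_C0 (bumpD x0 e) 0). apply bumpD_chain. Qed.

Lemma orth_zero (g : R -> R) al be : al < be -> C0 g ->
  (forall x0 e, 0 < e -> al < x0 - e -> x0 + e < be ->
     RInt (fun x => g x * bump x0 e x) al be = 0) ->
  forall x, al <= x <= be -> g x = 0.
Proof.
  intros Hab Hg Horth.
  assert (Hin : forall x0, al < x0 < be -> g x0 = 0).
  { intros x0 Hx0. destruct (Req_dec (g x0) 0) as [|Hne]; auto. exfalso.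
    assert (Hp : 0 < Rabs (g x0) / 2) by (apply Rabs_pos_lt in Hne; lra).
    destruct (cont_eps g x0 (Hg x0) _ Hp) as [d [Hd Hdd]].
    set (e := Rmin d (Rmin (x0 - al) (be - x0)) / 2).
    assert (He1 : e <= d / 2) by (unfold e; pose proof (Rmin_l d (Rmin (x0 - al) (be - x0))); lra).
    assert (He2 : e <= (x0 - al) / 2) by (unfold e; pose proof (Rmin_r d (Rmin (x0 - al) (be - x0))); pose proof (Rmin_l (x0 - al) (be - x0)); lra).
    assert (He3 : e <= (be - x0) / 2) by (unfold e; pose proof (Rmin_r d (Rmin (x0 - al) (be - x0))); pose proof (Rmin_r (x0 - al) (be - x0)); lra).
    assert (He0 : 0 < e).
    { unfold e. apply Rdiv_lt_0_compat; [|lra]. apply Rmin_glb_lt; auto. apply Rmin_glb_lt; lra. }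
    specialize (Horth x0 e He0 ltac:(lra) ltac:(lra)).
    assert (Hpos : 0 < RInt (fun x => g x0 * (g x * bump x0 e x)) al be).
    { apply (RInt_pos_restrict _ al be (x0 - e) (x0 + e)); try lra.
      - apply C0_scal. apply C0_mult; auto. apply bump_C0.
      - intros x Hx. rewrite bump_zero by (auto; lra). ring.
      - intros x Hx. assert (Hb := bump_pos x0 e x He0 Hx).
        assert (Hgx : Rabs (g x - g x0) < Rabs (g x0) / 2) by (apply Hdd; apply Rabs_def1; lra).
        assert (0 < g x0 * g x).
        { destruct (Rlt_dec 0 (g x0)).
          - rewrite (Rabs_right (g x0)) in Hgx by lra. apply Rabs_def2 in Hgx. destruct Hgx. nra.
          - assert (g x0 < 0) by lra. rewrite (Rabs_left (g x0)) in Hgx by lra. apply Rabs_def2 in Hgx. destruct Hgx. nra. }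
        nra. }
    rewrite RInt_scal' in Hpos. rewrite Horth in Hpos. lra.
    apply C0_ex_RInt. apply C0_mult; auto. apply bump_C0. }
  intros x [[Hx1|Hx1] [Hx2|Hx2]]; try (apply Hin; lra).
  -
    subst x. destruct (Req_dec (g be) 0) as [|Hne]; auto. exfalso.
    assert (Hp : 0 < Rabs (g be)) by (apply Rabs_pos_lt; auto).
    destruct (cont_eps g be (Hg be) _ Hp) as [d [Hd Hdd]].
    set (y := be - Rmin d (be - al) / 2).
    assert (Hy : 0 < Rmin d (be - al)) by (apply Rmin_glb_lt; lra).
    pose proof (Rmin_l d (be - al)). pose proof (Rmin_r d (be - al)).
    specialize (Hdd y ltac:(apply Rabs_def1; unfold y; lra)).
    rewrite (Hin y) in Hdd by (unfold y; lra). rewrite Rminus_0_l, Rabs_Ropp in Hdd. lra.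
  - subst x. destruct (Req_dec (g al) 0) as [|Hne]; auto. exfalso.
    assert (Hp : 0 < Rabs (g al)) by (apply Rabs_pos_lt; auto).
    destruct (cont_eps g al (Hg al) _ Hp) as [d [Hd Hdd]].
    set (y := al + Rmin d (be - al) / 2).
    assert (Hy : 0 < Rmin d (be - al)) by (apply Rmin_glb_lt; lra).
    pose proof (Rmin_l d (be - al)). pose proof (Rmin_r d (be - al)).
    specialize (Hdd y ltac:(apply Rabs_def1; unfold y; lra)).
    rewrite (Hin y) in Hdd by (unfold y; lra). rewrite Rminus_0_l, Rabs_Ropp in Hdd. lra.
Qed.

Ltac c0 := match goal with
  | |- ex_RInt _ _ _ => apply C0_ex_RInt; c0
  | |- C0 (fun _ => ?c) => apply C0_const
  | |- C0 (kk _) => apply kk_C0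
  | |- C0 (fun x => kk _ x) => apply kk_C0
  | |- C0 (fun x => _ * _) => apply C0_mult; c0
  | |- C0 (fun x => _ - _) => apply C0_minus; c0
  | |- C0 (fun x => _ + _) => apply C0_plus; c0
  | |- _ => first [assumption | (apply chain_C0; assumption) | apply bump_C0]
  end.

Lemma lin3 (F0 F1 F2 : R -> R) a b al be : C0 F0 -> C0 F1 -> C0 F2 ->
  RInt (fun x => F0 x - a * F1 x - b * F2 x) al be = RInt F0 al be - a * RInt F1 al be - b * RInt F2 al be.
Proof.
  intros H0 H1 H2.
  rewrite RInt_minus'; [rewrite RInt_minus'|..]; try rewrite !RInt_scal'; auto; try c0.
  all: try (apply ex_RInt_scal'; c0).
Qed.

Lemma reg c al be (U G : R -> R) : al < be -> C0 U -> C0 G ->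
  (forall D l h, chain D -> al < l -> h < be -> supp D l h ->
     RInt (fun x => U x * (c * D 1%nat x - D 2%nat x)) al be = RInt (fun x => G x * D 0%nat x) al be) ->
  exists A B, forall x, al <= x <= be -> U x = A + B * kk c x + PP c G al x.
Proof.
  intros Hab HU HG Hweak.
  set (V := fun x => U x - PP c G al x).
  assert (HV : C0 V) by (unfold V; apply C0_minus; auto; apply PP_C0; auto).
  assert (Hw : forall D l h, chain D -> al < l -> h < be -> supp D l h ->
     RInt (fun x => V x * (c * D 1%nat x - D 2%nat x)) al be = 0).
  { intros D l h Hc Hl Hh Hs.
    assert (HL : C0 (fun x => c * D 1%nat x - D 2%nat x)) by (apply C0_minus; [apply C0_scal|]; c0).
    rewrite (RInt_ext _ (fun x => U x * (c * D 1%nat x - D 2%nat x) - PP c G al x * (c * D 1%nat x - D 2%nat x)))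
      by (intros; unfold V; fixeq; ring).
    rewrite RInt_minus'. rewrite (Hweak D l h), (ibp c G al be D l h); auto. fixeq; ring.
    all: apply C0_ex_RInt, C0_mult; auto. apply PP_C0; auto. }
  set (L := be - al). set (e := L / 8). set (p1 := al + L / 4). set (p2 := al + 3 * L / 4).
  assert (He : 0 < e) by (unfold e, L; lra).
  destruct (bump_test p1 e He) as [Hc1 Hs1].
  destruct (bump_test p2 e He) as [Hc2 Hs2].
  set (b1 := bump p1 e). set (b2 := bump p2 e).
  assert (Hb1 : C0 b1) by apply bump_C0. assert (Hb2 : C0 b2) by apply bump_C0.
  set (m1 := RInt b1 al be). set (m2 := RInt b2 al be).
  set (n1 := RInt (fun x => kk c x * b1 x) al be). set (n2 := RInt (fun x => kk c x * b2 x) al be).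
  assert (Hm1 : 0 < m1).
  { apply (RInt_pos_restrict _ al be (p1 - e) (p1 + e)); auto; try (unfold p1, e, L; lra).
    all: intros x Hx; first [apply bump_pos; auto; lra | apply bump_zero; auto; lra]. }
  assert (Hm2 : 0 < m2).
  { apply (RInt_pos_restrict _ al be (p2 - e) (p2 + e)); auto; try (unfold p2, e, L; lra).
    all: intros x Hx; first [apply bump_pos; auto; lra | apply bump_zero; auto; lra]. }
  assert (Hn1 : n1 <= kk c (p1 + e) * m1).
  { unfold n1, m1. rewrite <- (RInt_scal' b1) by (apply C0_ex_RInt; exact Hb1). apply RInt_le'; [lra|c0|c0|].
    intros x Hx. destruct (Rle_dec x (p1 + e)).
    - apply Rmult_le_compat_r. apply bump_ge0. apply kk_le; auto.
    - unfold b1. rewrite bump_zero by (auto; lra). lra. }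
  assert (Hn2 : kk c (p2 - e) * m2 <= n2).
  { unfold n2, m2. rewrite <- (RInt_scal' b2) by (apply C0_ex_RInt; exact Hb2). apply RInt_le'; [lra|c0|c0|].
    intros x Hx. destruct (Rle_dec (p2 - e) x).
    - apply Rmult_le_compat_r. apply bump_ge0. apply kk_le; auto.
    - unfold b2. rewrite bump_zero by (auto; lra). lra. }
  assert (Hk : kk c (p1 + e) < kk c (p2 - e)) by (apply kk_lt; unfold p1, p2, e, L; lra).
  set (det := m1 * n2 - m2 * n1).
  assert (Hdet : 0 < det).
  { unfold det. apply Rlt_le_trans with (m1 * m2 * (kk c (p2 - e) - kk c (p1 + e))).
    - apply Rmult_lt_0_compat; [apply Rmult_lt_0_compat|]; lra.
    - nra. }
  set (V1 := RInt (fun x => V x * b1 x) al be). set (V2 := RInt (fun x => V x * b2 x) al be).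
  set (lam := (n2 * V1 - n1 * V2) / det). set (mu := (m1 * V2 - m2 * V1) / det).
  assert (Key : forall Psi l h, chain Psi -> al < l -> h < be -> supp Psi l h ->
     RInt (fun x => (V x - lam - mu * kk c x) * Psi 0%nat x) al be = 0).
  { intros Psi l h Hc Hl Hh Hs.
    assert (HP0 : C0 (Psi 0%nat)) by c0.
    set (M := RInt (Psi 0%nat) al be). set (N := RInt (fun x => kk c x * Psi 0%nat x) al be).
    set (a := (M * n2 - m2 * N) / det). set (b := (m1 * N - n1 * M) / det).
    set (chi := fun n x => Psi n x - a * bumpD p1 e n x - b * bumpD p2 e n x).
    assert (Hcc : chain chi).
    { intros n x. unfold chi.
      apply (is_derive_minus (fun x => Psi n x - a * bumpD p1 e n x) (fun x => b * bumpD p2 e n x)).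
      apply (is_derive_minus (Psi n) (fun x => a * bumpD p1 e n x)). apply Hc.
      apply is_derive_scal; apply Hc1. apply is_derive_scal; apply Hc2. }
    assert (Hsc : supp chi (Rmin l (p1 - e)) (Rmax h (p2 + e))).
    { intros x Hx. unfold chi.
      assert (Hm := Rmin_l l (p1 - e)). assert (Hm' := Rmin_r l (p1 - e)).
      assert (HM := Rmax_l h (p2 + e)). assert (HM' := Rmax_r h (p2 + e)).
      rewrite (Hs x), (Hs1 x), (Hs2 x); try ring.
      all: unfold p1, p2, e, L in *; lra. }
    assert (Hmom0 : RInt (chi 0%nat) al be = 0).
    { unfold chi. change (RInt (fun x => Psi 0%nat x - a * b1 x - b * b2 x) al be = 0).
      rewrite lin3; auto. fold M m1 m2. fixeq. unfold a, b. fixeq. unfold a, b, det. field. unfold det in Hdet; lra. }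
    assert (Hmom1 : RInt (fun x => kk c x * chi 0%nat x) al be = 0).
    { unfold chi. change (RInt (fun x => kk c x * (Psi 0%nat x - a * b1 x - b * b2 x)) al be = 0).
      rewrite (RInt_ext _ (fun x => kk c x * Psi 0%nat x - a * (kk c x * b1 x) - b * (kk c x * b2 x)))
        by (intros; fixeq; ring).
      rewrite lin3 by c0. fold N n1 n2. fixeq. unfold a, b, det. field. unfold det in Hdet; lra. }
    assert (Hz := zero_moment c al be V HV Hw chi (Rmin l (p1 - e)) (Rmax h (p2 + e)) Hcc).
    assert (Hz' : RInt (fun x => V x * chi 0%nat x) al be = 0).
    { apply Hz; auto.
      apply Rmin_glb_lt; auto. unfold p1, e, L; lra.
      apply Rmax_lub_lt; auto. unfold p2, e, L; lra. }
    unfold chi in Hz'. change (RInt (fun x => V x * (Psi 0%nat x - a * b1 x - b * b2 x)) al be = 0) in Hz'.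
    rewrite (RInt_ext _ (fun x => V x * Psi 0%nat x - a * (V x * b1 x) - b * (V x * b2 x))) in Hz'
      by (intros; fixeq; ring).
    rewrite lin3 in Hz' by c0. fold V1 V2 in Hz'.
    rewrite (RInt_ext _ (fun x => V x * Psi 0%nat x - lam * Psi 0%nat x - mu * (kk c x * Psi 0%nat x)))
      by (intros; fixeq; ring).
    rewrite lin3 by c0. fold M N.
    assert (E : RInt (fun x => V x * Psi 0%nat x) al be = a * V1 + b * V2) by lra.
    rewrite E. fixeq. unfold a, b, lam, mu, det. field. unfold det in Hdet; lra. }
  exists lam, mu. intros x Hx.
  assert (Hg : C0 (fun x => V x - lam - mu * kk c x)) by (apply C0_minus; [c0|apply C0_scal; c0]).
  assert (Hz := orth_zero _ al be Hab Hg).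
  assert (Hx0 : V x - lam - mu * kk c x = 0).
  { apply Hz; auto. intros x0 e0 He0 Hl Hh.
    destruct (bump_test x0 e0 He0) as [Hc0 Hs0].
    apply (Key (bumpD x0 e0) (x0 - e0) (x0 + e0)); auto. }
  unfold V in Hx0. lra.
Qed.

Lemma exp_le' x y : x <= y -> exp x <= exp y.
Proof. intros [H|H]; [left; apply exp_increasing; auto|subst; lra]. Qed.

Lemma exp_bnd c a t : -a <= t <= a -> exp (c * t) <= exp (Rabs c * a).
Proof.
  intros Ht. apply exp_le'.
  apply Rle_trans with (Rabs (c * t)). apply RRle_abs.
  rewrite Rabs_mult. apply Rmult_le_compat_l. apply Rabs_pos. apply Rabs_le; lra.
Qed.

Lemma C0_cpt (f : R -> R) x : C0 f -> continuity_pt f x.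
Proof. intros Hf. apply continuity_pt_filterlim. apply Hf. Qed.

Section PosLemma.
Variables (c a A B K : R) (U G : R -> R).
Hypothesis Ha : 0 < a.
Hypothesis HU : C0 U.
Hypothesis HG : C0 G.
Hypothesis HK : 0 <= K.
Hypothesis Hrep : forall x, -a <= x <= a -> U x = A + B * kk c x + PP c G (-a) x.
Hypothesis Hnn : forall x, -a <= x <= a -> 0 <= U x.
Hypothesis HGb : forall x, -a <= x <= a -> - K * U x <= G x.

Let Phi x := A + B * kk c x + PP c G (-a) x.
Let J := Jf c G (-a).

Lemma Phi_der x : is_derive Phi x (B * exp (- c * x) - exp (- c * x) * J x).
Proof.
  unfold Phi. assert (E1 := kk_der c x). assert (E2 := PP_der c G (-a) x HG).
  auto_derive.
  - split; [eexists; eauto|split; [eexists; eauto|auto]].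
  - replace (Derive (fun x0 => kk c x0) x) with (exp (- c * x)) by (symmetry; apply is_derive_unique; auto).
    replace (Derive (fun x0 => PP c G (- a) x0) x) with (- (exp (- c * x) * Jf c G (- a) x)) by (symmetry; apply is_derive_unique; auto).
    unfold J. ring.
Qed.

Lemma claim1 x1 : -a < x1 < a -> U x1 = 0 -> B = J x1.
Proof.
  intros Hx1 Hu.
  assert (Hd := Phi_der x1). apply is_derive_Reals in Hd.
  set (pr := exist (fun l => derivable_pt_lim Phi x1 l) _ Hd : derivable_pt Phi x1).
  assert (Hz : derive_pt Phi x1 pr = 0).
  { apply (deriv_minimum Phi (-a) a x1 pr); try lra.
    intros x Hx1' Hx2'. unfold Phi. rewrite <- !Hrep by lra. rewrite Hu. apply Hnn; lra. }
  simpl in Hz. assert (Hep : 0 < exp (- c * x1)) by apply exp_pos.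
  assert (Hm0 : exp (- c * x1) * (B - J x1) = 0) by (rewrite <- Hz; ring).
  apply Rmult_integral in Hm0. destruct Hm0; lra.
Qed.

Lemma J_C0 : C0 J.
Proof. apply Jf_C0; auto. Qed.

Lemma claim2 x1 y : -a < x1 < a -> U x1 = 0 -> -a <= y <= x1 ->
  U y = - RInt (fun s => exp (- c * s) * (J x1 - J s)) y x1.
Proof.
  intros Hx1 Hu Hy.
  assert (HB := claim1 x1 Hx1 Hu).
  assert (HI : is_RInt (fun s => exp (- c * s) * (J x1 - J s)) y x1 (minus (Phi x1) (Phi y))).
  { apply (is_RInt_derive (V:=R_CompleteNormedModule) Phi).
    - intros x _. replace (exp (- c * x) * (J x1 - J x)) with (B * exp (- c * x) - exp (- c * x) * J x) by (rewrite HB; ring).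
      apply Phi_der.
    - intros. apply C0_mult. apply C0_exp. apply C0_minus. apply C0_const. apply J_C0. }
  apply (is_RInt_unique (V:=R_CompleteNormedModule)) in HI.
  rewrite HI. unfold Phi. rewrite <- !Hrep by lra. rewrite Hu. unfold minus, plus, opp; simpl. ring.
Qed.

Let Eb := exp (Rabs c * a).
Let dl := Rmin 1 (/ (2 * (Eb * Eb * K) + 1)).

Lemma Eb_ge1 : 1 <= Eb.
Proof. unfold Eb. rewrite <- exp_0. apply exp_le'. apply Rmult_le_pos. apply Rabs_pos. lra. Qed.

Lemma dl_pos : 0 < dl.
Proof.
  unfold dl. apply Rmin_glb_lt. lra. apply Rinv_0_lt_compat.
  assert (0 <= Eb * Eb * K) by (apply Rmult_le_pos; [apply Rmult_le_pos|]; pose proof Eb_ge1; lra). lra.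
Qed.

Lemma dl_small : dl * dl * (Eb * Eb * K) <= / 2.
Proof.
  set (q := Eb * Eb * K).
  assert (Hq : 0 <= q) by (unfold q; apply Rmult_le_pos; [apply Rmult_le_pos|]; pose proof Eb_ge1; lra).
  assert (H1 : dl <= 1) by apply Rmin_l.
  assert (H2 : dl <= / (2 * q + 1)) by apply Rmin_r.
  pose proof dl_pos.
  assert (H3 : dl * (2 * q + 1) <= 1).
  { apply Rmult_le_reg_r with (/ (2 * q + 1)). apply Rinv_0_lt_compat; lra.
    rewrite Rmult_assoc, Rinv_r, Rmult_1_r, Rmult_1_l by lra. auto. }
  nra.
Qed.

Lemma claim3 x1 : -a < x1 < a -> U x1 = 0 -> forall y, Rmax (-a) (x1 - dl) <= y <= x1 -> U y = 0.
Proof.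
  intros Hx1 Hu.
  set (x' := Rmax (-a) (x1 - dl)).
  assert (Hx'1 : -a <= x') by apply Rmax_l.
  assert (Hx'2 : x1 - dl <= x') by apply Rmax_r.
  assert (Hx'3 : x' <= x1) by (apply Rmax_lub; pose proof dl_pos; lra).
  destruct (continuity_ab_maj U x' x1 Hx'3 (fun c _ => C0_cpt U c HU)) as [Mx [HMxi HMx]].
  set (M := U Mx).
  assert (HM0 : 0 <= M) by (apply Hnn; lra).
  pose proof Eb_ge1 as HEb. pose proof dl_pos as Hdl.
  assert (Hbound : forall y, x' <= y <= x1 -> U y <= dl * dl * (Eb * Eb * K) * M).
  { intros y Hy. rewrite (claim2 x1 y Hx1 Hu) by lra.
    assert (HC : C0 (fun s => exp (- c * s) * (J x1 - J s))).
    { apply C0_mult. apply C0_exp. apply C0_minus. apply C0_const. apply J_C0. }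
    assert (Eneg : - RInt (fun s => exp (- c * s) * (J x1 - J s)) y x1 =
      RInt (fun s => -1 * (exp (- c * s) * (J x1 - J s))) y x1).
    { rewrite RInt_scal'. fixeq; ring. apply C0_ex_RInt; auto. }
    rewrite Eneg.
    apply Rle_trans with (RInt (fun _ => Eb * Eb * K * M * dl) y x1).
    - apply RInt_le'; [lra| |apply C0_const|].
      + apply C0_scal; auto.
      + intros s Hs.
        assert (HJ : J x1 - J s = RInt (fun t => exp (c * t) * G t) s x1).
        { unfold J, Jf. rewrite <- (RInt_Chasles' _ (-a) s x1). fixeq; ring.
          all: apply C0_ex_RInt, C0_mult; auto; apply C0_exp. }
        assert (HJb : - (Eb * K * M) * (x1 - s) <= J x1 - J s).
        { rewrite HJ. replace (- (Eb * K * M) * (x1 - s)) with (RInt (fun _ => - (Eb * K * M)) s x1)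
            by (rewrite RInt_const'; fixeq; ring).
          apply RInt_le'; [lra|apply C0_const| |].
          apply C0_mult; auto; apply C0_exp.
          intros t Ht. assert (Ht1 : U t <= M) by (apply HMxi; lra).
          assert (Hg := HGb t ltac:(lra)).
          assert (He1 := exp_bnd c a t ltac:(lra)). fold Eb in He1.
          assert (He0 := exp_pos (c * t)).
          assert (HGt : G t >= - (K * M)) by nra.
          assert (HKM : 0 <= K * M) by nra.
          assert (exp (c * t) * G t >= exp (c * t) * (- (K * M))) by (apply Rmult_ge_compat_l; lra).
          assert (exp (c * t) * (K * M) <= Eb * (K * M)) by (apply Rmult_le_compat_r; lra).
          lra. }
        assert (He2 := exp_bnd (- c) a s ltac:(lra)). rewrite Rabs_Ropp in He2. fold Eb in He2.
        replace (- c * s) with (- c * s) by ring.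
        assert (He0 := exp_pos (- c * s)).
        assert (0 <= Eb * K * M) by (apply Rmult_le_pos; [apply Rmult_le_pos|]; lra).
        assert (x1 - s <= dl) by lra.
        assert (- (J x1 - J s) <= Eb * K * M * dl) by nra.
        assert (0 <= Eb * K * M * dl) by nra.
        nra.
    - rewrite RInt_const'.
      assert (0 <= Eb * Eb * K * M * dl) by (repeat apply Rmult_le_pos; lra).
      assert (x1 - y <= dl) by lra. nra. }
  assert (HMb := Hbound Mx HMx). fold M in HMb.
  assert (HM : M <= 0) by (pose proof dl_small; nra).
  intros y Hy. assert (U y <= M) by (apply HMxi; auto).
  assert (0 <= U y) by (apply Hnn; lra). lra.
Qed.

Hypothesis Hstart : 0 < U (-a).

Theorem pos_lemma : forall x, -a < x < a -> 0 < U x.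
Proof.
  intros x1 Hx1. assert (H0 := Hnn x1 ltac:(lra)). destruct H0 as [|H0]; auto. exfalso.
  symmetry in H0.
  assert (Hind : forall n, forall y, Rmax (-a) (x1 - INR n * dl) <= y <= x1 -> U y = 0).
  { induction n; intros y Hy.
    - simpl in Hy. rewrite Rmult_0_l, Rminus_0_r in Hy. assert (y = x1).
      { pose proof (Rmax_r (-a) x1). lra. }
      subst; auto.
    - rewrite S_INR in Hy. set (z := x1 - INR n * dl) in *.
      destruct (Rle_dec y z) as [Hyz|Hyz].
      2:{ apply IHn. split; [|lra]. apply Rmax_lub; [pose proof (Rmax_l (-a) (x1 - (INR n + 1) * dl)); lra|lra]. }
      destruct (Rle_dec z (-a)) as [Hz|Hz].
      + apply IHn. split; [|lra]. rewrite Rmax_left by lra. pose proof (Rmax_l (-a) (x1 - (INR n + 1) * dl)); lra.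
      + assert (Hzn : 0 <= INR n * dl) by (apply Rmult_le_pos; [apply pos_INR|left; apply dl_pos]).
        assert (Uz : U z = 0) by (apply IHn; split; [apply Rmax_lub; lra|unfold z; lra]).
        pose proof (Rmax_l (-a) (x1 - (INR n + 1) * dl)). pose proof (Rmax_r (-a) (x1 - (INR n + 1) * dl)).
        apply (claim3 z).
        * unfold z in *; lra.
        * exact Uz.
        * split; [|exact Hyz]. apply Rmax_lub; unfold z in *; lra. }
  destruct (INR_archimed dl (x1 + a) dl_pos) as [n Hn].
  assert (U (-a) = 0).
  { apply (Hind n). split; [|lra]. rewrite Rmax_left. lra. lra. }
  lra.
Qed.
End PosLemma.

Definition cl (a x : R) : R := Rmax (- a) (Rmin a x).

Lemma cl_in a x : 0 < a -> - a <= cl a x <= a.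
Proof. intros Ha. unfold cl, Rmax, Rmin. repeat destruct Rle_dec; lra. Qed.
Lemma cl_id a x : - a <= x <= a -> cl a x = x.
Proof. intros Hx. unfold cl, Rmax, Rmin. repeat destruct Rle_dec; lra. Qed.
Lemma cl_lip a x y : 0 < a -> Rabs (cl a y - cl a x) <= Rabs (y - x).
Proof.
  intros Ha. unfold cl, Rmax, Rmin. repeat destruct Rle_dec; unfold Rabs; repeat destruct Rcase_abs; lra.
Qed.

Lemma cl_C0 (f : R -> R) a : 0 < a -> continuous_on_closed f (- a) a -> C0 (fun x => f (cl a x)).
Proof.
  intros Ha Hc x. apply (proj1 (continuity_pt_filterlim _ _)).
  unfold continuity_pt, continue_in, limit1_in, limit_in. intros eps He.
  destruct (Hc (cl a x) (cl_in a x Ha) eps He) as [d [Hd Hdd]].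
  exists d; split; auto. intros y [_ Hy]. simpl in *. unfold R_dist in *.
  apply Hdd. apply cl_in; auto. eapply Rle_lt_trans; [apply cl_lip; auto|exact Hy].
Qed.

Lemma weak_to_RInt c (u F ut Gt : R -> R) a al be : 0 < a -> - a <= al -> be <= a ->
  weak_solution c u F (- a) a -> C0 ut -> (forall x, - a <= x <= a -> u x = ut x) -> C0 Gt ->
  (forall x, al < x < be -> F x = Gt x) ->
  forall D l h, chain D -> al < l -> h < be -> supp D l h ->
    RInt (fun x => ut x * (c * D 1%nat x - D 2%nat x)) al be = RInt (fun x => Gt x * D 0%nat x) al be.
Proof.
  intros Ha Hal Hbe Hw Hut Hu HGt HF D l h Hc Hl Hh Hs.
  assert (Hsa := chain_supp_all D l h Hc Hs).
  destruct (Hw D) as [I [H1 H2]].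
  { split. intros n x. apply is_derive_Reals. apply Hc.
    exists l, h. split; [lra|split; [lra|]]. exact Hs. }
  set (g1 := fun x => ut x * (c * D 1%nat x - D 2%nat x)).
  set (g2 := fun x => Gt x * D 0%nat x).
  assert (Hg1 : C0 g1). { unfold g1. apply C0_mult; auto. apply C0_minus. apply C0_scal; apply chain_C0; auto. apply chain_C0; auto. }
  assert (Hg2 : C0 g2). { unfold g2. apply C0_mult; auto. apply chain_C0; auto. }
  assert (E1 : I = RInt g1 (- a) a).
  { apply (HK_unique (fun x => u x * (c * D 1%nat x - D 2%nat x)) (- a) a); [lra|auto|].
    apply (HK_ext _ g1). intros x Hx; unfold g1; rewrite Hu; auto.
    apply HK_cont; auto; lra. }
  assert (E2 : I = RInt g2 (- a) a).
  { apply (HK_unique (fun x => F x * D 0%nat x) (- a) a); [lra|auto|].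
    apply (HK_ext _ g2). intros x Hx; unfold g2.
    destruct (Rlt_dec x l) as [Hxl|Hxl]. rewrite Hsa by auto; ring.
    destruct (Rlt_dec h x) as [Hxh|Hxh]. rewrite Hsa by auto; ring.
    rewrite HF; auto; lra.
    apply HK_cont; auto; lra. }
  assert (Z1 : forall x, x < l \/ h < x -> g1 x = 0).
  { intros x Hx; unfold g1; rewrite (Hsa 1%nat), (Hsa 2%nat) by auto; ring. }
  assert (Z2 : forall x, x < l \/ h < x -> g2 x = 0).
  { intros x Hx; unfold g2; rewrite (Hsa 0%nat) by auto; ring. }
  assert (Hle : l <= h \/ h < l) by lra.
  destruct Hle as [Hle|Hlt].
  - assert (R1 : RInt g1 al be = RInt g1 (- a) a).
    { rewrite (RInt_restrict g1 al be l h), (RInt_restrict g1 (- a) a l h); auto; lra. }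
    assert (R2 : RInt g2 al be = RInt g2 (- a) a).
    { rewrite (RInt_restrict g2 al be l h), (RInt_restrict g2 (- a) a l h); auto; lra. }
    change (RInt g1 al be = RInt g2 al be). rewrite R1, R2, <- E1, <- E2. reflexivity.
  - change (RInt g1 al be = RInt g2 al be).
    rewrite (RInt_zero_on g1), (RInt_zero_on g2); auto.
    all: intros x Hx; destruct (Rlt_dec x l); [apply Z1 || apply Z2; auto| apply Z1 || apply Z2; lra].
Qed.

Lemma last_zero (f : R -> R) lo x0 : C0 f -> lo < x0 -> 0 <= f lo -> f x0 < 0 ->
  exists al, lo <= al < x0 /\ f al = 0 /\ forall y, al < y <= x0 -> f y < 0.
Proof.
  intros Hf Hlo Hflo Hfx.
  set (E := fun y => lo <= y <= x0 /\ 0 <= f y).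
  assert (Hb : bound E) by (exists x0; intros y [Hy _]; lra).
  assert (Hne : exists y, E y) by (exists lo; split; [lra|auto]).
  destruct (completeness E Hb Hne) as [al [Hub Hlub]].
  assert (H1 : lo <= al) by (apply Hub; split; [lra|auto]).
  assert (H2 : al <= x0) by (apply Hlub; intros y [Hy _]; lra).
  assert (Hge : 0 <= f al).
  { destruct (Rle_dec 0 (f al)) as [|Hn]; auto. exfalso.
    assert (Hp : 0 < - f al / 2) by lra.
    destruct (cont_eps f al (Hf al) _ Hp) as [d [Hd Hdd]].
    destruct (classic (exists y, E y /\ al - d < y)) as [[y [[Hy1 Hy2] Hy3]]|Hno].
    - assert (y <= al) by (apply Hub; split; auto).
      assert (Hfy := Hdd y ltac:(apply Rabs_def1; lra)). apply Rabs_def2 in Hfy. lra.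
    - assert (Hu : is_upper_bound E (al - d)).
      { intros y Ey. destruct (Rle_dec y (al - d)); auto. exfalso; apply Hno; exists y; split; auto; lra. }
      specialize (Hlub _ Hu). lra. }
  assert (Hlt : al < x0) by (destruct H2; auto; subst; lra).
  assert (Hneg : forall y, al < y <= x0 -> f y < 0).
  { intros y Hy. destruct (Rlt_dec (f y) 0); auto. exfalso.
    assert (y <= al) by (apply Hub; split; [lra|lra]). lra. }
  exists al. split; [lra|split; auto].
  destruct Hge as [Hgt|]; auto. exfalso.
  destruct (cont_eps f al (Hf al) _ Hgt) as [d [Hd Hdd]].
  set (y := Rmin (al + d / 2) x0).
  assert (Hy1 : al < y) by (unfold y; apply Rmin_glb_lt; lra).
  assert (Hy2 : y <= al + d / 2) by apply Rmin_l.
  assert (Hy3 : y <= x0) by apply Rmin_r.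
  assert (Hfy := Hdd y ltac:(apply Rabs_def1; lra)). apply Rabs_def2 in Hfy.
  assert (f y < 0) by (apply Hneg; lra). lra.
Qed.

Lemma first_zero (f : R -> R) x0 hi : C0 f -> x0 < hi -> 0 <= f hi -> f x0 < 0 ->
  exists be, x0 < be <= hi /\ f be = 0 /\ forall y, x0 <= y < be -> f y < 0.
Proof.
  intros Hf Hhi Hfh Hfx.
  assert (Hg : C0 (fun y => f (- y))).
  { assert (Hm : C0 (fun y => - y)).
    { apply (C0_deriv _ (fun _ => -1)). intros y. auto_derive; auto. }
    intros y. apply (continuous_comp (fun y => - y) f). apply Hm. apply Hf. }
  destruct (last_zero (fun y => f (- y)) (- hi) (- x0) Hg) as [al [Hal [Hz Hn]]]; try lra.
  rewrite Ropp_involutive; auto. rewrite Ropp_involutive; auto.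
  exists (- al). split; [lra|split; auto].
  intros y Hy. rewrite <- (Ropp_involutive y). apply Hn. lra.
Qed.

Lemma PP_zero c al x : PP c (fun _ => 0) al x = 0.
Proof.
  unfold PP, Jf.
  rewrite (RInt_ext _ (fun _ => 0)). rewrite RInt_const'. fixeq; ring.
  intros s _. rewrite (RInt_zero_on (fun t => exp (c * t) * 0)). fixeq; ring.
  intros; ring.
Qed.

Lemma chi_pos y : 0 <= y -> chi_nonneg y = 1.
Proof. intros; unfold chi_nonneg; destruct Rle_dec; lra. Qed.
Lemma chi_neg y : y < 0 -> chi_nonneg y = 0.
Proof. intros; unfold chi_nonneg; destruct Rle_dec; lra. Qed.

Lemma nonneg c a (u F ut : R -> R) : 0 < a -> C0 ut -> (forall x, - a <= x <= a -> u x = ut x) ->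
  weak_solution c u F (- a) a -> (forall x, - a <= x <= a -> ut x < 0 -> F x = 0) ->
  0 <= ut (- a) -> 0 <= ut a -> forall x, - a <= x <= a -> 0 <= ut x.
Proof.
  intros Ha Hut Hu Hw HF H0 H1 x0 Hx0.
  destruct (Rle_dec 0 (ut x0)) as [|Hn]; auto. exfalso.
  assert (Hneg : ut x0 < 0) by lra.
  assert (Hx0' : - a < x0 < a) by (destruct Hx0 as [[|] [|]]; subst; split; lra).
  destruct (last_zero ut (- a) x0 Hut) as [al [Hal [Hz1 Hn1]]]; try lra.
  destruct (first_zero ut x0 a Hut) as [be [Hbe [Hz2 Hn2]]]; try lra.
  assert (Hweak := weak_to_RInt c u F ut (fun _ => 0) a al be Ha ltac:(lra) ltac:(lra) Hw Hut Hu (C0_const 0)).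
  destruct (reg c al be ut (fun _ => 0) ltac:(lra) Hut (C0_const 0)) as [A [B HAB]].
  { apply Hweak. intros x Hx. apply HF. lra.
    destruct (Rle_dec x x0); [apply Hn1|apply Hn2]; lra. }
  assert (E1 := HAB al ltac:(lra)). assert (E2 := HAB be ltac:(lra)). assert (E3 := HAB x0 ltac:(lra)).
  rewrite PP_zero in E1, E2, E3.
  assert (Hk := kk_lt c al be ltac:(lra)).
  assert (B = 0) by nra. subst B. lra.
Qed.

Theorem mainTheorem4 (r K mu ws ms a c : R) (w m : R -> R) :
  assumption1 r K mu ->
  is_coexistence_state r K mu ws ms ->
  0 < a ->
  solves_Pa r K mu ws ms a c w m ->
  forall x, - a <= x < a -> 0 < w x /\ 0 < m x.
Proof.
  intros Hass Hco Ha Hsol x Hx.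
  destruct Hass as [Hr [Hmu [Hmu2 [Hmu3 [Hmu4 [Hmu5 [HK0 [HK1 HK2]]]]]]]].
  destruct Hco as [[[Hws1 Hws2] [[Hms1 Hms2] _]] _].
  destruct Hsol as [Hcw [Hcm [Hww [Hwm [Hw0 [Hm0 [Hwa Hma]]]]]]].
  set (wt := fun x => w (cl a x)). set (mt := fun x => m (cl a x)).
  assert (HCw : C0 wt) by (apply cl_C0; auto).
  assert (HCm : C0 mt) by (apply cl_C0; auto).
  assert (Huw : forall x, - a <= x <= a -> w x = wt x) by (intros; unfold wt; rewrite cl_id; auto).
  assert (Hum : forall x, - a <= x <= a -> m x = mt x) by (intros; unfold mt; rewrite cl_id; auto).
  assert (Hwt0 : wt (- a) = ws) by (rewrite <- Huw; auto; lra).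
  assert (Hmt0 : mt (- a) = ms) by (rewrite <- Hum; auto; lra).
  assert (Hwta : wt a = 0) by (rewrite <- Huw; auto; lra).
  assert (Hmta : mt a = 0) by (rewrite <- Hum; auto; lra).
  assert (Hwnn : forall x, - a <= x <= a -> 0 <= wt x).
  { apply (nonneg c a w _ wt Ha HCw Huw Hww); try lra.
    intros y Hy Hneg. rewrite (chi_neg (w y)) by (rewrite Huw; auto). ring. }
  assert (Hmnn : forall x, - a <= x <= a -> 0 <= mt x).
  { apply (nonneg c a m _ mt Ha HCm Hum Hwm); try lra.
    intros y Hy Hneg. rewrite (chi_neg (m y)) by (rewrite Hum; auto). ring. }
  assert (HCs : C0 (fun x => wt x + mt x)) by (apply C0_plus; auto).
  destruct (continuity_ab_maj (fun x => wt x + mt x) (- a) a ltac:(lra) (fun c _ => C0_cpt _ c HCs))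
    as [Mx [HMx HMxi]].
  set (Mb := wt Mx + mt Mx).
  assert (HMb0 : 0 <= Mb) by (unfold Mb; assert (H1 := Hwnn Mx HMxi); assert (H2 := Hmnn Mx HMxi); lra).
  assert (HMb : forall x, - a <= x <= a -> wt x + mt x <= Mb) by (intros; apply HMx; auto).
  set (Gw := fun x => f_w mu (wt x) (mt x)).
  assert (HGw : C0 Gw).
  { unfold Gw, f_w. apply C0_plus; apply C0_mult; auto.
    apply C0_minus. apply C0_const. apply C0_plus; auto. apply C0_const. apply C0_minus; auto. }
  destruct (reg c (- a) a wt Gw ltac:(lra) HCw HGw) as [Aw [Bw HABw]].
  { apply (weak_to_RInt c w _ wt Gw a (- a) a Ha ltac:(lra) ltac:(lra) Hww HCw Huw HGw).
    intros y Hy. rewrite chi_pos, chi_pos. unfold Gw. rewrite Huw, Hum by lra. ring.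
    rewrite Hum by lra; apply Hmnn; lra. rewrite Huw by lra; apply Hwnn; lra. }
  assert (Hposw := pos_lemma c a Aw Bw (Mb + mu) wt Gw Ha HCw HGw ltac:(lra) HABw Hwnn).
  set (Gm := fun x => f_m r K mu (wt x) (mt x)).
  assert (HGm : C0 Gm).
  { unfold Gm, f_m. apply C0_plus; apply C0_mult; auto.
    apply C0_mult; auto. apply C0_const.
    apply C0_minus. apply C0_const. unfold Rdiv. apply C0_mult. apply C0_plus; auto. apply C0_const.
    apply C0_const. apply C0_minus; auto. }
  destruct (reg c (- a) a mt Gm ltac:(lra) HCm HGm) as [Am [Bm HABm]].
  { apply (weak_to_RInt c m _ mt Gm a (- a) a Ha ltac:(lra) ltac:(lra) Hwm HCm Hum HGm).
    intros y Hy. rewrite chi_pos, chi_pos. unfold Gm. rewrite Huw, Hum by lra. ring.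
    rewrite Hum by lra; apply Hmnn; lra. rewrite Huw by lra; apply Hwnn; lra. }
  assert (HMK : 0 <= Mb / K) by (apply Rmult_le_pos; auto; left; apply Rinv_0_lt_compat; auto).
  assert (Hposm := pos_lemma c a Am Bm (r * (Mb / K) + mu) mt Gm Ha HCm HGm
    ltac:(assert (0 <= r * (Mb / K)) by (apply Rmult_le_pos; lra); lra) HABm Hmnn).
  destruct (Req_dec x (- a)) as [->|Hxa].
  - rewrite Hw0, Hm0. lra.
  - assert (Hx' : - a < x < a) by lra.
    rewrite Huw, Hum by lra. split.
    + apply Hposw; auto; [|lra].
      intros y Hy. unfold Gw, f_w.
      assert (H1 := Hwnn y Hy). assert (H2 := Hmnn y Hy). assert (H3 := HMb y Hy).
      assert (wt y * (wt y + mt y) <= wt y * Mb) by (apply Rmult_le_compat_l; auto).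
      assert (0 <= mu * mt y) by (apply Rmult_le_pos; lra).
      nra.
    + apply Hposm; auto; [|lra].
      intros y Hy. unfold Gm, f_m.
      assert (H1 := Hwnn y Hy). assert (H2 := Hmnn y Hy). assert (H3 := HMb y Hy).
      assert (Hq : (wt y + mt y) / K <= Mb / K).
      { unfold Rdiv. apply Rmult_le_compat_r; auto. left; apply Rinv_0_lt_compat; auto. }
      assert (r * mt y * ((wt y + mt y) / K) <= r * mt y * (Mb / K)).
      { apply Rmult_le_compat_l; auto. apply Rmult_le_pos; lra. }
      assert (0 <= mu * wt y) by (apply Rmult_le_pos; lra).
      nra.
Qed.
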